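(* Let $\mathcal{C}$ be a differential $\lambda$-category satisfying the Hahn–Banach Separation Theorem, and interpret the language below in $\mathcal{C}$ as described. (1) If $\Gamma_1\cup\{x:\sigma_1\}\vdash\mathbb{P}_1:\tau$ and $x\in\mathrm{lin}(\mathbb{P}_1)$, then for every $\gamma_1\in[\![\Gamma_1]\!]$ the morphism $\lambda([\![\mathbb{P}_1]\!])\gamma_1:[\![\sigma_1]\!]\to[\![\tau]\!]$ is linear, i.e. $D[\lambda([\![\mathbb{P}_1]\!])\gamma_1]=(\lambda([\![\mathbb{P}_1]\!])\gamma_1)\circ\pi_1$. (2) If $\Gamma_2\vdash\mathbb{P}_2:\sigma^{*}$, then for every $\gamma_2\in[\![\Gamma_2]\!]$ the morphism $[\![\mathbb{P}_2]\!]\gamma_2$ is linear, i.e. $D[[\![\mathbb{P}_2]\!]\gamma_2]=([\![\mathbb{P}_2]\!]\gamma_2)\circ\pi_1$.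
   Context: Differential $\lambda$-category: a category with finite products, each homset a commutative monoid $(+,0)$ with $(g+h)\circ f=g\circ f+h\circ f$, $0\circ f=0$, projections and pairings of additive maps additive, Cartesian closed with currying $\lambda(-)$ additive, and an operator $D:\mathcal{C}(A,B)\to\mathcal{C}(A\times A,B)$ satisfying the Cartesian differential axioms [CD1] $D$ additive; [CD2] $D[f]$ additive in its first argument; [CD3] $D[\mathrm{Id}]=\pi_1$, $D[\pi_1]=\pi_1\circ\pi_1$, $D[\pi_2]=\pi_2\circ\pi_1$; [CD4] $D[\langle f,g\rangle]=\langle D[f],D[g]\rangle$; [CD5] $D[g\circ f]=D[g]\circ\langle D[f],f\circ\pi_2\rangle$; [CD6] $D[D[f]]\circ\langle\langle g,0\rangle,\langle h,k\rangle\rangle=D[f]\circ\langle g,k\rangle$; [CD7] $D[D[f]]\circ\langle\langle 0,h\rangle,\langle g,k\rangle\rangle=D[D[f]]\circ\langle\langle 0,g\rangle,\langle h,k\rangle\rangle$; plus (D-curry) $D[\lambda(f)]=\lambda(D[f]\circ\langle\pi_1\times 0,\pi_2\times\mathrm{Id}\rangle)$. A morphism $f$ is linear if $D[f]=f\circ\pi_1$. $\mathcal{C}$ satisfies the Hahn–Banach Separation Theorem if $\mathbb{R}$ is an object and for any object $A$ and distinct elements $x,y$ of $A$ there is a linear $l:A\to\mathbb{R}$ with $l(x)\neq l(y)$. Syntax (over variables $x,y,v,\dots$, reals $r$, vectors $\vec r\in\mathbb{R}^n$, and a set $\mathcal{F}$ of smooth functions $f:\mathbb{R}^n\to\mathbb{R}^m$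 which are morphisms of $\mathcal{C}$): simple terms $\mathbb{S}::=x\mid\lambda x.\mathbb{S}\mid\mathbb{S}\,\mathbb{P}\mid\pi_i(\mathbb{S})\mid\langle\mathbb{S},\mathbb{S}\rangle\mid\underline{r}\mid\underline{f}(\mathbb{P})\mid\mathbf{J}f\cdot\mathbb{S}\mid(\lambda x.\mathbb{S})^{*}\mathbb{S}\mid\Omega(\lambda x.\mathbb{P})\,\mathbb{S}\mid\underline{\vec r}^{\,*}$ (Jacobian, dual map, pullback, dual constant); pullback terms $\mathbb{P}::=0\mid\mathbb{S}\mid\mathbb{S}+\mathbb{P}$. Types $\sigma::=\mathsf{R}\mid\sigma\times\sigma\mid\sigma\Rightarrow\sigma\mid\sigma^{*}$, with $\mathsf{R}^{n+1}\equiv\mathsf{R}^n\times\mathsf{R}$ and $\Omega\sigma\equiv\sigma\Rightarrow\sigma^{*}$. Linear variables: $\mathrm{lin}(x)=\{x\}$; $\mathrm{lin}(\lambda x.\mathbb{S})=\mathrm{lin}(\mathbb{S})\setminus\{x\}$; $\mathrm{lin}(\mathbb{S}\,\mathbb{P})=\mathrm{lin}(\mathbb{S})\setminus\mathrm{FV}(\mathbb{P})$; $\mathrm{lin}(\pi_i(\mathbb{S}))=\mathrm{lin}(\mathbb{S})$; $\mathrm{lin}(\langle\mathbb{S}_1,\mathbb{S}_2\rangle)=\mathrm{lin}(\mathbb{S}_1)\cap\mathrm{lin}(\mathbb{S}_2)$; $\mathrm{lin}(\mathbf{J}f\cdot\mathbb{S})=\mathrm{lin}(\mathbb{S})$; $\mathrm{lin}((\lambda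 x.\mathbb{S}_1)^*\mathbb{S}_2)=(\mathrm{lin}(\mathbb{S}_1)\setminus\mathrm{FV}(\mathbb{S}_2))\cup(\mathrm{lin}(\mathbb{S}_2)\setminus\mathrm{FV}(\mathbb{S}_1))$; $\mathrm{lin}=\emptyset$ in all other cases. Typing: $\Gamma\vdash 0:\sigma$; $\Gamma\vdash\mathbb{S}:\sigma,\Gamma\vdash\mathbb{P}:\sigma\Rightarrow\Gamma\vdash\mathbb{S}+\mathbb{P}:\sigma$; $\Gamma\cup\{x:\sigma\}\vdash x:\sigma$; standard rules for $\lambda$, application (argument a pullback term), $\pi_i$, pairs; $\Gamma\vdash\underline r:\mathsf{R}$; $\Gamma\vdash\mathbb{P}:\mathsf{R}^n\Rightarrow\Gamma\vdash\underline f(\mathbb{P}):\mathsf{R}^m$; $\Gamma\vdash\mathbb{S}:\mathsf{R}^n\Rightarrow\Gamma\vdash\mathbf{J}f\cdot\mathbb{S}:\mathsf{R}^n\Rightarrow\mathsf{R}^m$; $\Gamma\vdash\underline{\vec r}^{\,*}:(\mathsf{R}^n)^*$ for $\vec r\in\mathbb{R}^n$; if $\Gamma\cup\{x:\sigma\}\vdash\mathbb{S}_1:\tau$, $\Gamma\vdash\mathbb{S}_2:\tau^*$ and $x\in\mathrm{lin}(\mathbb{S}_1)$ then $\Gamma\vdash(\lambda x.\mathbb{S}_1)^*\mathbb{S}_2:\sigma^*$; if $\Gamma\cup\{x:\sigma\}\vdash\mathbb{P}:\tau$ and $\Gamma\vdash\mathbb{S}:\Omega\tau$ then $\Gamma\vdash\Omega(\lambda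 x.\mathbb{P})\mathbb{S}:\Omega\sigma$. Interpretation: $[\![\mathsf{R}]\!]=\mathbb{R}$, $[\![\sigma_1\times\sigma_2]\!]=[\![\sigma_1]\!]\times[\![\sigma_2]\!]$, $[\![\sigma_1\Rightarrow\sigma_2]\!]=\mathcal{C}([\![\sigma_1]\!],[\![\sigma_2]\!])$, $[\![\sigma^*]\!]=$ linear morphisms $[\![\sigma]\!]\to\mathbb{R}$; $[\![\Gamma\cup\{x:\sigma\}]\!]=[\![\Gamma]\!]\times[\![\sigma]\!]$; for $\gamma\in[\![\Gamma]\!]$: $[\![0]\!]\gamma=0$; $[\![\mathbb{S}+\mathbb{P}]\!]\gamma=[\![\mathbb{S}]\!]\gamma+[\![\mathbb{P}]\!]\gamma$; $[\![x]\!]\langle\gamma,z\rangle=z$; $[\![\lambda x.\mathbb{S}]\!]\gamma=\lambda([\![\mathbb{S}]\!])\gamma$; $[\![\mathbb{S}\,\mathbb{P}]\!]\gamma=([\![\mathbb{S}]\!]\gamma)([\![\mathbb{P}]\!]\gamma)$; projections and pairs componentwise; $[\![\underline r]\!]\gamma=r$; $[\![\underline f(\mathbb{P})]\!]\gamma=f([\![\mathbb{P}]\!]\gamma)$; $[\![\mathbf{J}f\cdot\mathbb{S}]\!]\gamma=x\mapsto D[f]\langle[\![\mathbb{S}]\!]\gamma,x\rangle$; $[\![\underline{\vec r}^{\,*}]\!]\gamma=(v_1,\dots,v_n)\mapsto\sum_i r_iv_i$; $[\![(\lambda x.\mathbb{S}_1)^*\mathbb{S}_2]\!]\gamma=v\mapsto[\![\mathbb{S}_2]\!]\gamma([\![\mathbb{S}_1]\!]\langle\gamma,v\rangle)$;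 $[\![\Omega(\lambda x.\mathbb{P})\mathbb{S}]\!]\gamma=x\mapsto v\mapsto[\![\mathbb{S}]\!]\gamma([\![\mathbb{P}]\!]\langle\gamma,x\rangle)(D[\lambda([\![\mathbb{P}]\!])\gamma]\langle v,x\rangle)$. *)

(* Defs.v *)
From HB Require Import structures.
From mathcomp Require Import all_boot all_algebra.
From mathcomp Require Import reals.
Set Implicit Arguments. Unset Strict Implicit. Unset Printing Implicit Defensive.
Import GRing.Theory Num.Theory.
Local Open Scope ring_scope.

Record lcat := LCat {
  Obj : Type;
  Hom : Obj -> Obj -> Type;
  idm : forall A, Hom A A;
  compm : forall X Y Z, Hom Y Z -> Hom X Y -> Hom X Z;
  unitobj : Obj;
  bang : forall A, Hom A unitobj;
  prodo : Obj -> Obj -> Obj;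
  pi1 : forall A B, Hom (prodo A B) A;
  pi2 : forall A B, Hom (prodo A B) B;
  pairm : forall X A B, Hom X A -> Hom X B -> Hom X (prodo A B);
  expo : Obj -> Obj -> Obj;
  evm : forall A B, Hom (prodo (expo A B) A) B;
  curm : forall X A B, Hom (prodo X A) B -> Hom X (expo A B);
  addm : forall A B, Hom A B -> Hom A B -> Hom A B;
  zerom : forall A B, Hom A B;
  Dop : forall A B, Hom A B -> Hom (prodo A A) B
}.
Arguments Hom {l} _ _.
Arguments idm {l} A.
Arguments compm {l X Y Z} _ _.
Arguments unitobj {l}.
Arguments bang {l} A.
Arguments prodo {l} _ _.
Arguments pi1 {l} A B.
Arguments pi2 {l} A B.
Arguments pairm {l X A B} _ _.
Arguments expo {l} _ _.
Arguments evm {l} A B.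
Arguments curm {l X A B} _.
Arguments addm {l A B} _ _.
Arguments zerom {l} A B.
Arguments Dop {l A B} _.

Section CatDefs.
Variable C : lcat.

Definition prodm (A B A' B' : Obj C) (f : Hom A A') (g : Hom B B')
  : Hom (prodo A B) (prodo A' B') :=
  pairm (compm f (pi1 A B)) (compm g (pi2 A B)).

Definition cadditive (A B : Obj C) (f : Hom A B) : Prop :=
  (forall X (g h : Hom X A), compm f (addm g h) = addm (compm f g) (compm f h)) /\
  (forall X, compm f (zerom X A) = zerom X B).

Definition dlinear (A B : Obj C) (f : Hom A B) : Prop :=
  Dop f = compm f (pi1 A A).

Definition mor_of_pt (A B : Obj C) (a : Hom unitobj (expo A B)) : Hom A B :=
  compm (evm A B) (pairm (compm a (bang A)) (idm A)).

Record dlc_axioms : Prop := {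
  comp_assoc : forall (W X Y Z : Obj C) (h : Hom Y Z) (g : Hom X Y) (f : Hom W X),
      compm h (compm g f) = compm (compm h g) f;
  comp_idl : forall (X Y : Obj C) (f : Hom X Y), compm (idm Y) f = f;
  comp_idr : forall (X Y : Obj C) (f : Hom X Y), compm f (idm X) = f;
  bang_unique : forall (A : Obj C) (f : Hom A unitobj), f = bang A;
  pi1_pair : forall (X A B : Obj C) (f : Hom X A) (g : Hom X B),
      compm (pi1 A B) (pairm f g) = f;
  pi2_pair : forall (X A B : Obj C) (f : Hom X A) (g : Hom X B),
      compm (pi2 A B) (pairm f g) = g;
  pair_eta : forall (X A B : Obj C) (h : Hom X (prodo A B)),
      pairm (compm (pi1 A B) h) (compm (pi2 A B) h) = h;
  ev_cur : forall (X A B : Obj C) (f : Hom (prodo X A) B),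
      compm (evm A B) (prodm (curm f) (idm A)) = f;
  cur_eta : forall (X A B : Obj C) (h : Hom X (expo A B)),
      curm (compm (evm A B) (prodm h (idm A))) = h;
  add_assoc : forall (A B : Obj C) (f g h : Hom A B),
      addm f (addm g h) = addm (addm f g) h;
  add_comm : forall (A B : Obj C) (f g : Hom A B), addm f g = addm g f;
  add_0l : forall (A B : Obj C) (f : Hom A B), addm (zerom A B) f = f;
  add_comp : forall (X A B : Obj C) (g h : Hom A B) (f : Hom X A),
      compm (addm g h) f = addm (compm g f) (compm h f);
  zero_comp : forall (X A B : Obj C) (f : Hom X A), compm (zerom A B) f = zerom X B;
  pi1_additive : forall A B : Obj C, cadditive (pi1 A B);
  pi2_additive : forall A B : Obj C, cadditive (pi2 A B);
  pair_additive : forall (X A B : Obj C) (f : Hom X A) (g : Hom X B),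
      cadditive f -> cadditive g -> cadditive (pairm f g);
  cur_add : forall (X A B : Obj C) (f g : Hom (prodo X A) B),
      curm (addm f g) = addm (curm f) (curm g);
  cur_zero : forall X A B : Obj C, curm (zerom (prodo X A) B) = zerom X (expo A B);
  CD1_add : forall (A B : Obj C) (f g : Hom A B), Dop (addm f g) = addm (Dop f) (Dop g);
  CD1_zero : forall A B : Obj C, Dop (zerom A B) = zerom (prodo A A) B;
  CD2_add : forall (A B X : Obj C) (f : Hom A B) (g h k : Hom X A),
      compm (Dop f) (pairm (addm g h) k)
      = addm (compm (Dop f) (pairm g k)) (compm (Dop f) (pairm h k));
  CD2_zero : forall (A B X : Obj C) (f : Hom A B) (k : Hom X A),
      compm (Dop f) (pairm (zerom X A) k) = zerom X B;
  CD3_id : forall A : Obj C, Dop (idm A) = pi1 A A;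
  CD3_pi1 : forall A B : Obj C,
      Dop (pi1 A B) = compm (pi1 A B) (pi1 (prodo A B) (prodo A B));
  CD3_pi2 : forall A B : Obj C,
      Dop (pi2 A B) = compm (pi2 A B) (pi1 (prodo A B) (prodo A B));
  CD4 : forall (X A B : Obj C) (f : Hom X A) (g : Hom X B),
      Dop (pairm f g) = pairm (Dop f) (Dop g);
  CD5 : forall (A B E : Obj C) (f : Hom A B) (g : Hom B E),
      Dop (compm g f) = compm (Dop g) (pairm (Dop f) (compm f (pi2 A A)));
  CD6 : forall (A B X : Obj C) (f : Hom A B) (g h k : Hom X A),
      compm (Dop (Dop f)) (pairm (pairm g (zerom X A)) (pairm h k))
      = compm (Dop f) (pairm g k);
  CD7 : forall (A B X : Obj C) (f : Hom A B) (g h k : Hom X A),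
      compm (Dop (Dop f)) (pairm (pairm (zerom X A) h) (pairm g k))
      = compm (Dop (Dop f)) (pairm (pairm (zerom X A) g) (pairm h k));
  D_curry : forall (X A B : Obj C) (f : Hom (prodo X A) B),
      Dop (curm f)
      = curm (compm (Dop f) (pairm (prodm (pi1 X X) (zerom A A))
                                   (prodm (pi2 X X) (idm A))))
}.

End CatDefs.

Inductive ty := TR | TProd of ty & ty | TArr of ty & ty | TDual of ty.

Definition TOmega (s : ty) : ty := TArr s (TDual s).

(* Rpow k = R^(k+1), with R^(n+1) = R^n x R and R^1 = R *)
Fixpoint Rpow (k : nat) : ty := if k is k'.+1 then TProd (Rpow k') TR else TR.

Section Syntax.
Variables (R : Type) (Fsym : Type).
(* each symbol f : R^(fin f + 1) -> R^(fout f + 1) *)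
Variables (fin fout : Fsym -> nat).

Inductive sterm :=
  | SVar of nat
  | SLam of nat & sterm
  | SApp of sterm & pterm
  | SPi1 of sterm
  | SPi2 of sterm
  | SPair of sterm & sterm
  | SConst of R
  | SFun of Fsym & pterm
  | SJac of Fsym & sterm
  | SPull of nat & sterm & sterm        (* (lambda x. S1)^* S2 *)
  | SOmega of nat & pterm & sterm       (* Omega (lambda x. P) S *)
  | SDualC of seq R
with pterm :=
  | PZero
  | PS of sterm
  | PAdd of sterm & pterm.

Fixpoint fv_s (s : sterm) : nat -> bool :=
  match s with
  | SVar y => fun z => z == y
  | SLam x t => fun z => (z != x) && fv_s t z
  | SApp t p => fun z => fv_s t z || fv_p p z
  | SPi1 t => fv_s t
  | SPi2 t => fv_s t
  | SPair t u => fun z => fv_s t z || fv_s u z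
  | SConst _ => fun _ => false
  | SFun _ p => fv_p p
  | SJac _ t => fv_s t
  | SPull x t u => fun z => ((z != x) && fv_s t z) || fv_s u z
  | SOmega x p t => fun z => ((z != x) && fv_p p z) || fv_s t z
  | SDualC _ => fun _ => false
  end
with fv_p (p : pterm) : nat -> bool :=
  match p with
  | PZero => fun _ => false
  | PS t => fv_s t
  | PAdd t q => fun z => fv_s t z || fv_p q z
  end.

Fixpoint lin_s (s : sterm) : nat -> bool :=
  match s with
  | SVar y => fun z => z == y
  | SLam x t => fun z => (z != x) && lin_s t z
  | SApp t p => fun z => lin_s t z && ~~ fv_p p z
  | SPi1 t => lin_s t
  | SPi2 t => lin_s t
  | SPair t u => fun z => lin_s t z && lin_s u z
  | SJac _ t => lin_s t
  | SPull x t u => fun z =>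
      ((z != x) && lin_s t z && ~~ fv_s u z) || (lin_s u z && ~~ fv_s t z)
  | _ => fun _ => false
  end.

Definition lin_p (p : pterm) : nat -> bool :=
  match p with PS t => lin_s t | _ => fun _ => false end.

(* contexts: (x, s) :: G  stands for  G U {x : s} *)
Definition ctx := seq (nat * ty).

Inductive styped : ctx -> sterm -> ty -> Type :=
  | TyVarHere G x s : styped ((x, s) :: G) (SVar x) s
  | TyVarThere G x y s t :
      x != y -> styped G (SVar x) s -> styped ((y, t) :: G) (SVar x) s
  | TyLam G x s t b : styped ((x, s) :: G) b t -> styped G (SLam x b) (TArr s t)
  | TyApp G f p s t :
      styped G f (TArr s t) -> ptyped G p s -> styped G (SApp f p) t
  | TyPi1 G u s t : styped G u (TProd s t) -> styped G (SPi1 u) s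
  | TyPi2 G u s t : styped G u (TProd s t) -> styped G (SPi2 u) t
  | TyPair G u v s t :
      styped G u s -> styped G v t -> styped G (SPair u v) (TProd s t)
  | TyConst G r : styped G (SConst r) TR
  | TyFun G f p : ptyped G p (Rpow (fin f)) -> styped G (SFun f p) (Rpow (fout f))
  | TyJac G f u : styped G u (Rpow (fin f)) ->
      styped G (SJac f u) (TArr (Rpow (fin f)) (Rpow (fout f)))
  | TyDual G k r : size r = k.+1 -> styped G (SDualC r) (TDual (Rpow k))
  | TyPull G x u v s t :
      styped ((x, s) :: G) u t -> styped G v (TDual t) -> lin_s u x ->
      styped G (SPull x u v) (TDual s)
  | TyOmega G x p u s t :
      ptyped ((x, s) :: G) p t -> styped G u (TOmega t) ->
      styped G (SOmega x p u) (TOmega s)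
with ptyped : ctx -> pterm -> ty -> Type :=
  | TyZero G s : ptyped G PZero s
  | TyPS G u s : styped G u s -> ptyped G (PS u) s
  | TyAdd G u p s : styped G u s -> ptyped G p s -> ptyped G (PAdd u p) s.

End Syntax.

Fixpoint tyI (C : lcat) (Robj : Obj C) (t : ty) : Obj C :=
  match t with
  | TR => Robj
  | TProd s u => prodo (tyI Robj s) (tyI Robj u)
  | TArr s u => expo (tyI Robj s) (tyI Robj u)
  | TDual s => expo (tyI Robj s) Robj   (* linearity enforced by [good] *)
  end.

Record realstr (R : realType) (C : lcat) (Fsym : Type) (fin fout : Fsym -> nat) := {
  Robj : Obj C;
  rpt : R -> Hom (@unitobj C) Robj;
  dualc : forall k : nat, seq R -> Hom (tyI Robj (Rpow k)) Robj;
                                         (* v |-> sum_i r_i v_i *)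
  fmor : forall f : Fsym, Hom (tyI Robj (Rpow (fin f))) (tyI Robj (Rpow (fout f)))
}.
Arguments Robj {R C Fsym fin fout} r.
Arguments rpt {R C Fsym fin fout} r _.
Arguments dualc {R C Fsym fin fout} r k _.
Arguments fmor {R C Fsym fin fout} r f.

Section Interp.
Variables (R : realType) (C : lcat) (Fsym : Type) (fin fout : Fsym -> nat).
Variable RS : realstr R C fin fout.

Local Notation tI := (tyI (Robj RS)).

Fixpoint ctxI (G : ctx) : Obj C :=
  match G with
  | [::] => unitobj
  | xs :: G' => prodo (ctxI G') (tI xs.2)
  end.

Fixpoint vecpt (k : nat) (v : nat -> R) : Hom (@unitobj C) (tI (Rpow k)) :=
  match k return Hom unitobj (tI (Rpow k)) with
  | 0 => rpt RS (v 0%N)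
  | k'.+1 => pairm (vecpt k' v) (rpt RS (v k'.+1))
  end.

Fixpoint sI G s t (d : styped fin fout G s t) {struct d} : Hom (ctxI G) (tI t) :=
  match d in styped _ _ G s t return Hom (ctxI G) (tI t) with
  | TyVarHere G x s => pi2 _ _
  | TyVarThere G x y s t _ d' => compm (sI d') (pi1 _ _)
  | TyLam G x s t b db => curm (sI db)
  | TyApp G f p s t df dp => compm (evm _ _) (pairm (sI df) (pI dp))
  | TyPi1 G u s t du => compm (pi1 _ _) (sI du)
  | TyPi2 G u s t du => compm (pi2 _ _) (sI du)
  | TyPair G u v s t du dv => pairm (sI du) (sI dv)
  | TyConst G r => compm (rpt RS r) (bang _)
  | TyFun G f p dp => compm (fmor RS f) (pI dp)
  | TyJac G f u du =>
      curm (compm (Dop (fmor RS f)) (pairm (compm (sI du) (pi1 _ _)) (pi2 _ _)))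
  | TyDual G k r _ => curm (compm (dualc RS k r) (pi2 _ _))
  | TyPull G x u v s t du dv _ =>
      (* gamma |-> (v |-> [[S2]]gamma ([[S1]]<gamma, v>)) *)
      curm (compm (evm _ _) (pairm (compm (sI dv) (pi1 _ _)) (sI du)))
  | TyOmega G x p u s t dp du =>
      (* gamma |-> x |-> v |->
           [[S]]gamma([[P]]<gamma,x>)(D[lambda([[P]])gamma]<v,x>),
         where D[lambda([[P]])gamma]<v,x> = D[[[P]]] << 0, v >, < gamma, x >> *)
      let q1 := pi1 (prodo (ctxI G) (tI s)) (tI s) in
      let q2 := pi2 (prodo (ctxI G) (tI s)) (tI s) in
      let t1 := compm (evm _ _)
                  (pairm (compm (sI du) (compm (pi1 _ _) q1)) (compm (pI dp) q1)) in
      let t2 := compm (Dop (pI dp)) (pairm (pairm (zerom _ (ctxI G)) q2) q1) in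
      curm (curm (compm (evm _ _) (pairm t1 t2)))
  end
with pI G p t (d : ptyped fin fout G p t) {struct d} : Hom (ctxI G) (tI t) :=
  match d in ptyped _ _ G p t return Hom (ctxI G) (tI t) with
  | TyZero G s => zerom _ _
  | TyPS G u s du => sI du
  | TyAdd G u p s du dp => addm (sI du) (pI dp)
  end.

(* semantic membership of a global element in [[t]]:
   [[s^*]] consists of the LINEAR morphisms [[s]] -> R *)
Fixpoint good (t : ty) : Hom (@unitobj C) (tI t) -> Prop :=
  match t return Hom unitobj (tI t) -> Prop with
  | TR => fun _ => True
  | TProd s u => fun a => @good s (compm (pi1 _ _) a) /\ @good u (compm (pi2 _ _) a)
  | TArr s u => fun a => forall b, @good s b -> @good u (compm (evm _ _) (pairm a b))
  | TDual s => fun a => dlinear (mor_of_pt a)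
  end.

Fixpoint ctx_good (G : ctx) : Hom (@unitobj C) (ctxI G) -> Prop :=
  match G return Hom unitobj (ctxI G) -> Prop with
  | [::] => fun _ => True
  | xs :: G' => fun g => @ctx_good G' (compm (pi1 _ _) g) /\ @good xs.2 (compm (pi2 _ _) g)
  end.

Definition realstr_ok : Prop :=
  bijective (rpt RS) /\
  (forall a b : R, rpt RS (a + b) = addm (rpt RS a) (rpt RS b)) /\
  rpt RS 0 = zerom _ _ /\
  (forall (k : nat) (r : seq R), size r = k.+1 -> dlinear (dualc RS k r)) /\
  (forall (k : nat) (r : seq R) (v : nat -> R), size r = k.+1 ->
      compm (dualc RS k r) (vecpt k v) = rpt RS (\sum_(i < k.+1) r`_i * v i)).

Definition hahn_banach : Prop :=
  forall (A : Obj C) (x y : Hom (@unitobj C) A), x <> y ->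
    exists l : Hom A (Robj RS), dlinear l /\ compm l x <> compm l y.

End Interp.

Arguments ctxI {R C Fsym fin fout} RS G.
Arguments vecpt {R C Fsym fin fout} RS k v.
Arguments sI {R C Fsym fin fout} RS {G s t} d.
Arguments pI {R C Fsym fin fout} RS {G p t} d.
Arguments good {R C Fsym fin fout} RS t _.
Arguments ctx_good {R C Fsym fin fout} RS G _.
Arguments realstr_ok {R C Fsym fin fout} RS.
Arguments hahn_banach {R C Fsym fin fout} RS.

(* Main.v *)
Require Import Defs.
From mathcomp Require Import all_boot reals.
Import Defs.

Module CatL.
Set Implicit Arguments.

Section CatLemmas.
Variable C : lcat.
Hypothesis ax : dlc_axioms C.

Lemma cA (W X Y Z : Obj C) (h : Hom Y Z) (g : Hom X Y) (f : Hom W X) :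
  compm (compm h g) f = compm h (compm g f).
Proof. by rewrite (comp_assoc ax). Qed.

Lemma pair_comp (Y X A B : Obj C) (f : Hom X A) (g : Hom X B) (h : Hom Y X) :
  compm (pairm f g) h = pairm (compm f h) (compm g h).
Proof.
rewrite -[LHS](pair_eta ax) -!cA (pi1_pair ax) (pi2_pair ax) //.
Qed.

Lemma pi1_pair' (Y X A B : Obj C) (f : Hom X A) (g : Hom X B) (h : Hom Y X) :
  compm (pi1 A B) (compm (pairm f g) h) = compm f h.
Proof. by rewrite -cA (pi1_pair ax). Qed.
Lemma pi2_pair' (Y X A B : Obj C) (f : Hom X A) (g : Hom X B) (h : Hom Y X) :
  compm (pi2 A B) (compm (pairm f g) h) = compm g h.
Proof. by rewrite -cA (pi2_pair ax). Qed.

Lemma pair_ext (X A B : Obj C) (h k : Hom X (prodo A B)) :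
  compm (pi1 A B) h = compm (pi1 A B) k -> compm (pi2 A B) h = compm (pi2 A B) k -> h = k.
Proof. by move=> e1 e2; rewrite -(pair_eta ax h) -(pair_eta ax k) e1 e2. Qed.

Lemma pair_pi (A B : Obj C) : pairm (pi1 A B) (pi2 A B) = idm _.
Proof. by have := pair_eta ax (idm (prodo A B)); rewrite !(comp_idr ax). Qed.

Lemma bang_comp (X Y : Obj C) (f : Hom X Y) : compm (bang Y) f = bang X.
Proof. exact: (bang_unique ax). Qed.

Lemma zero_bang (X : Obj C) : zerom X unitobj = bang X.
Proof. exact: (bang_unique ax). Qed.

Lemma pi1_zero (X A B : Obj C) : compm (pi1 A B) (zerom X _) = zerom X A.
Proof. exact: (pi1_additive ax A B).2. Qed.
Lemma pi2_zero (X A B : Obj C) : compm (pi2 A B) (zerom X _) = zerom X B.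
Proof. exact: (pi2_additive ax A B).2. Qed.

Lemma pair_zero (X A B : Obj C) : pairm (zerom X A) (zerom X B) = zerom X (prodo A B).
Proof. by apply: pair_ext; rewrite ?(pi1_pair ax) ?(pi2_pair ax) ?pi1_zero ?pi2_zero. Qed.

Lemma prodm_E (A B A' B' : Obj C) (f : Hom A A') (g : Hom B B') :
  prodm f g = pairm (compm f (pi1 A B)) (compm g (pi2 A B)).
Proof. by []. Qed.

Lemma prod_pair (Y X A B A' : Obj C) (f : Hom X B) (g : Hom A A') (u : Hom Y X) (c : Hom Y A) :
  compm (prodm f g) (pairm u c) = pairm (compm f u) (compm g c).
Proof. by rewrite prodm_E pair_comp !cA (pi1_pair ax) (pi2_pair ax). Qed.

Lemma ev_cur_pair (Y X A B : Obj C) (k : Hom (prodo X A) B) (u : Hom Y X) (c : Hom Y A) :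
  compm (evm A B) (pairm (compm (curm k) u) c) = compm k (pairm u c).
Proof.
have -> : pairm (compm (curm k) u) c = compm (prodm (curm k) (idm A)) (pairm u c).
  by rewrite prod_pair (comp_idl ax).
by rewrite -cA (ev_cur ax).
Qed.

Lemma ev_cur0 (X A B : Obj C) (k : Hom (prodo X A) B) (c : Hom X A) :
  compm (evm A B) (pairm (curm k) c) = compm k (pairm (idm X) c).
Proof. by rewrite -(comp_idr ax (curm k)) ev_cur_pair. Qed.

Lemma cur_nat (Y X A B : Obj C) (k : Hom (prodo X A) B) (h : Hom Y X) :
  compm (curm k) h = curm (compm k (pairm (compm h (pi1 Y A)) (pi2 Y A))).
Proof.
rewrite -[LHS](cur_eta ax); congr curm.
rewrite prodm_E (comp_idl ax).
by rewrite cA ev_cur_pair.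
Qed.


Lemma D_lin_comp (X A B : Obj C) (g : Hom A B) (f : Hom X A) :
  dlinear g -> Dop (compm g f) = compm g (Dop f).
Proof. by move=> hg; rewrite (CD5 ax) hg cA (pi1_pair ax). Qed.

Lemma lin_pi1 (A B : Obj C) : dlinear (pi1 A B).
Proof. exact: (CD3_pi1 ax). Qed.
Lemma lin_pi2 (A B : Obj C) : dlinear (pi2 A B).
Proof. exact: (CD3_pi2 ax). Qed.

Lemma D_pi1 (X A B : Obj C) (f : Hom X (prodo A B)) :
  Dop (compm (pi1 A B) f) = compm (pi1 A B) (Dop f).
Proof. by apply: D_lin_comp; apply: lin_pi1. Qed.
Lemma D_pi2 (X A B : Obj C) (f : Hom X (prodo A B)) :
  Dop (compm (pi2 A B) f) = compm (pi2 A B) (Dop f).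
Proof. by apply: D_lin_comp; apply: lin_pi2. Qed.

Lemma D_bang (X : Obj C) : Dop (bang X) = bang _.
Proof. exact: (bang_unique ax). Qed.

Lemma D_const (X A : Obj C) (c : Hom unitobj A) : Dop (compm c (bang X)) = zerom _ _.
Proof. by rewrite (CD5 ax) D_bang -zero_bang (CD2_zero ax). Qed.

Lemma lin_comp (X A B : Obj C) (g : Hom A B) (f : Hom X A) :
  dlinear g -> dlinear f -> dlinear (compm g f).
Proof. by move=> hg hf; rewrite /dlinear D_lin_comp // hf cA. Qed.

Lemma ev_add (X A B : Obj C) (f g : Hom X (expo A B)) (c : Hom X A) :
  compm (evm A B) (pairm (addm f g) c)
  = addm (compm (evm A B) (pairm f c)) (compm (evm A B) (pairm g c)).
Proof.
rewrite -[f](cur_eta ax) -[g](cur_eta ax) -(cur_add ax) !ev_cur0 (add_comp ax).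
by rewrite !cA !prod_pair !(comp_idl ax) !(comp_idr ax).
Qed.

Lemma ev_zero (X A B : Obj C) (c : Hom X A) :
  compm (evm A B) (pairm (zerom X (expo A B)) c) = zerom X B.
Proof. by rewrite -(cur_zero ax) ev_cur0 (zero_comp ax). Qed.

Lemma lin_add (A B : Obj C) (f g : Hom A B) :
  dlinear f -> dlinear g -> dlinear (addm f g).
Proof. by move=> hf hg; rewrite /dlinear (CD1_add ax) hf hg (add_comp ax). Qed.

Lemma lin_zero (A B : Obj C) : dlinear (zerom A B).
Proof. by rewrite /dlinear (CD1_zero ax) (zero_comp ax). Qed.

Lemma mor_of_pt_E (A B : Obj C) (a : Hom unitobj (expo A B)) :
  mor_of_pt a = compm (evm A B) (pairm (compm a (bang A)) (idm A)).
Proof. by []. Qed.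

End CatLemmas.

End CatL.
Import CatL.

Section Main.
Variables (R : realType) (C : lcat) (Fsym : Type) (fin fout : Fsym -> nat).
Variable RS : realstr R C fin fout.
Hypothesis ax : dlc_axioms C.
Local Notation tI := (tyI (Robj RS)).
Local Notation cI := (ctxI RS).

Fixpoint slotty (G : ctx) (n : nat) : ty :=
  match G with [::] => TR | xs :: G' => match n with 0 => xs.2 | m.+1 => slotty G' m end end.

Fixpoint upd (G : ctx) : forall (n : nat) (X : Obj C),
    Hom X (cI G) -> Hom X (tI (slotty G n)) -> Hom X (cI G) :=
  match G return forall n X, Hom X (cI G) -> Hom X (tI (slotty G n)) -> Hom X (cI G) with
  | [::] => fun n X g _ => g
  | xs :: G' => fun n X =>
      match n return Hom X (cI (xs :: G')) -> Hom X (tI (slotty (xs :: G') n)) -> Hom X (cI (xs :: G')) with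
      | 0 => fun g v => pairm (compm (pi1 _ _) g) v
      | m.+1 => fun g v => pairm (upd G' m X (compm (pi1 _ _) g) v) (compm (pi2 _ _) g)
      end
  end.

Fixpoint getm (G : ctx) : forall (n : nat) (X : Obj C),
    Hom X (cI G) -> Hom X (tI (slotty G n)) :=
  match G return forall n X, Hom X (cI G) -> Hom X (tI (slotty G n)) with
  | [::] => fun n X g => zerom _ _
  | xs :: G' => fun n X =>
      match n return Hom X (cI (xs :: G')) -> Hom X (tI (slotty (xs :: G') n)) with
      | 0 => fun g => compm (pi2 _ _) g
      | m.+1 => fun g => getm G' m X (compm (pi1 _ _) g)
      end
  end.

Lemma upd_nat G n X Y (g : Hom X (cI G)) v (f : Hom Y X) :
  compm (upd G n X g v) f = upd G n Y (compm g f) (compm v f).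
Proof.
elim: G n X Y g v f => [|xs G IH] [|n] X Y g v f //; cbn [upd].
  by rewrite (pair_comp ax) (cA ax).
by rewrite (pair_comp ax) IH !(cA ax).
Qed.

Lemma D_upd G n X (g : Hom X (cI G)) v :
  Dop (upd G n X g v) = upd G n _ (Dop g) (Dop v).
Proof.
elim: G n X g v => [|xs G IH] [|n] X g v //; cbn [upd].
- by rewrite [LHS](CD4 ax) (D_pi1 ax).
- by rewrite [LHS](CD4 ax) IH (D_pi1 ax) (D_pi2 ax).
Qed.

Lemma upd_get G n X (g : Hom X (cI G)) : upd G n X g (getm G n X g) = g.
Proof.
elim: G n X g => [|xs G IH] [|n] X g //; cbn [upd getm]; first exact: (pair_eta ax).
by rewrite IH (pair_eta ax).
Qed.

Ltac nrm := repeat first [ rewrite (cA ax) | rewrite (pi1_pair ax) | rewrite (pi2_pair ax)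
  | rewrite (pi1_pair' ax) | rewrite (pi2_pair' ax) | rewrite (pair_comp ax)
  | rewrite (comp_idl ax) | rewrite (comp_idr ax) | rewrite (zero_comp ax)
  | rewrite (pi1_zero ax) | rewrite (pi2_zero ax) | rewrite upd_nat ].

Definition Lin G n B (F : Hom (cI G) B) := forall X (g : Hom X (cI G)) v,
  compm (Dop F) (pairm (upd G n X (zerom X _) v) g) = compm F (upd G n X g v).
Definition Indep G n B (F : Hom (cI G) B) := forall X (g : Hom X (cI G)) v,
  compm F (upd G n X g v) = compm F g.

Lemma Indep_D G n B (F : Hom (cI G) B) : Indep G n B F ->
  forall X (g : Hom X (cI G)) v,
  compm (Dop F) (pairm (upd G n X (zerom X _) v) g) = zerom _ _.
Proof.
move=> H X g v.
have h := H _ (pi1 _ _) (pi2 _ _).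
have /(congr1 (fun k => compm k (pairm (pairm (zerom X _) v) (pairm g (getm G n X g))))) :=
  congr1 Dop h.
rewrite !(CD5 ax) !(cA ax) !(pair_comp ax) D_upd (CD3_pi1 ax) (CD3_pi2 ax).
nrm; rewrite upd_get (CD2_zero ax) => ->.
done.
Qed.

Lemma upd_S xs G n X (g : Hom X (cI (xs :: G))) v :
  upd (xs :: G) n.+1 X g v = pairm (upd G n X (compm (pi1 (cI G) (tI xs.2)) g) v) (compm (pi2 (cI G) (tI xs.2)) g).
Proof. by []. Qed.
Lemma upd_0 xs G X (g : Hom X (cI (xs :: G))) (v : Hom X (tI xs.2)) :
  upd (xs :: G) 0 X g v = pairm (compm (pi1 (cI G) (tI xs.2)) g) v.
Proof. by []. Qed.

Lemma upd_zero G n X : upd G n X (zerom X _) (zerom X _) = zerom X _.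
Proof.
elim: G n X => [|xs G IH] [|n] X //.
- by rewrite upd_0 (pi1_zero ax) (pair_zero ax).
- by rewrite upd_S (pi1_zero ax) (pi2_zero ax) IH (pair_zero ax).
Qed.

Ltac nrm2 := repeat first [ rewrite (cA ax) | rewrite (pi1_pair ax) | rewrite (pi2_pair ax)
  | rewrite (pi1_pair' ax) | rewrite (pi2_pair' ax) | rewrite (pair_comp ax)
  | rewrite (comp_idl ax) | rewrite (comp_idr ax) | rewrite (zero_comp ax)
  | rewrite (pi1_zero ax) | rewrite (pi2_zero ax) | rewrite upd_nat | rewrite prodm_E
  | rewrite upd_S | rewrite upd_0 | rewrite (bang_comp ax) ].

Lemma Ind_comp G n A B (h : Hom A B) F : Indep G n A F -> Indep G n B (compm h F).
Proof. by move=> H X g v; rewrite !(cA ax) H. Qed.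
Lemma Ind_pair G n A B F1 F2 : Indep G n A F1 -> Indep G n B F2 -> Indep G n _ (pairm F1 F2).
Proof. by move=> H1 H2 X g v; rewrite !(pair_comp ax) H1 H2. Qed.
Lemma Ind_const G n A (c : Hom unitobj A) : Indep G n A (compm c (bang _)).
Proof. by move=> X g v; rewrite !(cA ax) !(bang_comp ax). Qed.
Lemma Ind_zero G n A : Indep G n A (zerom _ _).
Proof. by move=> X g v; rewrite !(zero_comp ax). Qed.
Lemma Ind_add G n A F1 F2 : Indep G n A F1 -> Indep G n A F2 -> Indep G n A (addm F1 F2).
Proof. by move=> H1 H2 X g v; rewrite !(add_comp ax) H1 H2. Qed.
Lemma Ind_weak xs G n A U : Indep G n A U -> Indep (xs :: G) n.+1 A (compm U (pi1 _ _)).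
Proof. by move=> H X g v; rewrite upd_S !(cA ax) (pi1_pair ax) H. Qed.
Lemma Ind_weak0 xs G A U : Indep (xs :: G) 0 A (compm U (pi1 _ _)).
Proof. by move=> X g v; rewrite upd_0 !(cA ax) (pi1_pair ax). Qed.
Lemma Ind_pi2 xs G n : Indep (xs :: G) n.+1 _ (pi2 (cI G) (tI xs.2)).
Proof. by move=> X g v; rewrite upd_S (pi2_pair ax). Qed.
Lemma Ind_lam xs G n B K : Indep (xs :: G) n.+1 B K -> Indep G n _ (curm K).
Proof.
move=> H X g v; rewrite !(cur_nat ax); congr curm.
have := H _ (pairm (compm g (pi1 _ _)) (pi2 _ _)) (compm v (pi1 _ _)).
by nrm2 => ->.
Qed.

Lemma Ind_D xs G n B (P : Hom (cI (xs :: G)) B) : Indep (xs :: G) n.+1 B P ->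
  forall X (k : Hom X (cI G)) (w c : Hom X (tI xs.2)) v,
  compm (Dop P) (pairm (pairm (zerom _ _) c) (pairm (upd G n X k v) w))
  = compm (Dop P) (pairm (pairm (zerom _ _) c) (pairm k w)).
Proof.
move=> H X k w c v.
have h := H _ (pairm (compm k (pi1 _ _)) (pi2 X (tI xs.2))) (compm v (pi1 _ _)).
move: h; rewrite upd_S; nrm2.
move=> /(congr1 Dop); rewrite !(CD5 ax) !(CD4 ax) !(CD5 ax) D_upd !(CD5 ax) (CD3_pi1 ax) (CD3_pi2 ax).
move=> /(congr1 (fun q => compm q (pairm (pairm (zerom _ X) c) (pairm (idm X) w)))).
nrm2; rewrite !(CD2_zero ax) upd_zero.
done.
Qed.

Lemma Lin_weak xs G n A U : Lin G n A U -> Lin (xs :: G) n.+1 A (compm U (pi1 _ _)).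
Proof.
move=> H X g v; rewrite (CD5 ax) (CD3_pi1 ax) upd_S; nrm2.
by rewrite H.
Qed.
Lemma Lin_here xs G : Lin (xs :: G) 0 _ (pi2 (cI G) (tI xs.2)).
Proof. by move=> X g v; rewrite (CD3_pi2 ax) upd_0; nrm2. Qed.
Lemma Lin_pi1 G n A B T : Lin G n (prodo A B) T -> Lin G n A (compm (pi1 A B) T).
Proof. by move=> H X g v; rewrite (D_pi1 ax) !(cA ax) H. Qed.
Lemma Lin_pi2 G n A B T : Lin G n (prodo A B) T -> Lin G n B (compm (pi2 A B) T).
Proof. by move=> H X g v; rewrite (D_pi2 ax) !(cA ax) H. Qed.
Lemma Lin_pair G n A B T U : Lin G n A T -> Lin G n B U -> Lin G n _ (pairm T U).
Proof. by move=> H1 H2 X g v; rewrite (CD4 ax) !(pair_comp ax) H1 H2. Qed.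

Lemma Lin_lam xs G n B K : Lin (xs :: G) n.+1 B K -> Lin G n _ (curm K).
Proof.
move=> H X g v; rewrite (D_curry ax) !(cur_nat ax); congr curm.
have := H _ (pairm (compm g (pi1 _ _)) (pi2 _ _)) (compm v (pi1 X (tI xs.2))).
nrm2 => <-; nrm2.
done.
Qed.

Lemma D_ev_cur (X A B : Obj C) (h : Hom (prodo X A) B) (Y : Obj C) (a g : Hom Y X) (c : Hom Y A) :
  compm (Dop h) (pairm (pairm a (zerom Y A)) (pairm g c))
  = compm (evm A B) (pairm (compm (Dop (curm h)) (pairm a g)) c).
Proof. rewrite (D_curry ax) (ev_cur_pair ax); nrm2. done. Qed.

Lemma Lin_app G n A B T P : Lin G n (expo A B) T -> Indep G n A P ->
  Lin G n B (compm (evm A B) (pairm T P)).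
Proof.
move=> HT HP X g v.
set h := compm (evm A B) (prodm T (idm A)).
have eT : T = curm h by rewrite /h (cur_eta ax).
have -> : compm (evm A B) (pairm T P) = compm h (pairm (idm _) P).
  by rewrite /h (cA ax) (prod_pair ax) (comp_idl ax) (comp_idr ax).
rewrite (CD5 ax) (CD4 ax) (CD3_id ax); nrm2.
rewrite (@Indep_D _ _ _ _ HP) D_ev_cur -eT HT.
by rewrite HP.
Qed.

Lemma Lin_jac G n (A B : Obj C) (f : Hom A B) T : Lin G n A T ->
  Lin G n _ (curm (compm (Dop f) (pairm (compm T (pi1 (cI G) A)) (pi2 (cI G) A)))).
Proof.
move=> H X g v; rewrite (D_curry ax) !(cur_nat ax); congr curm.
rewrite !(CD5 ax) (CD4 ax) (CD5 ax) (CD3_pi1 ax) (CD3_pi2 ax); nrm2.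
rewrite (CD6 ax).
have := H _ (compm g (pi1 _ _)) (compm v (pi1 X A)).
nrm2 => ->.
done.
Qed.

Lemma Ind_omega xs G n (F : Obj C) (U : Hom (cI G) (expo F (expo F (Robj RS))))
  (P : Hom (cI (xs :: G)) F) :
  Indep G n _ U -> Indep (xs :: G) n.+1 _ P ->
  let q1 := pi1 (prodo (cI G) (tI xs.2)) (tI xs.2) in
  let q2 := pi2 (prodo (cI G) (tI xs.2)) (tI xs.2) in
  let t1 := compm (evm _ _) (pairm (compm U (compm (pi1 _ _) q1)) (compm P q1)) in
  let t2 := compm (Dop P) (pairm (pairm (zerom _ (cI G)) q2) q1) in
  Indep G n _ (curm (curm (compm (evm _ _) (pairm t1 t2)))).
Proof.
move=> HU HP q1 q2 t1 t2.
apply: (@Ind_lam xs G n); apply: (@Ind_lam (0%N, xs.2) (xs :: G) n.+1).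
apply: Ind_comp; apply: Ind_pair.
  apply: Ind_comp; apply: Ind_pair.
    rewrite /q1 -(cA ax); apply: Ind_weak; exact: Ind_weak.
  exact: Ind_weak.
move=> X g v; rewrite /t2 /q1 /q2; nrm2.
rewrite (@Ind_D _ _ _ _ _ HP).
congr (compm _ (pairm _ _)); exact: (pair_eta ax).
Qed.

Definition nm (G : ctx) (n : nat) : nat := (nth (0%N, TR) G n).1.

Lemma cond_l (c a b : bool) : c || ~~ (a || b) -> c || ~~ a.
Proof. by case: c a b => [] [] []. Qed.
Lemma cond_r (c a b : bool) : c || ~~ (a || b) -> c || ~~ b.
Proof. by case: c a b => [] [] []. Qed.

Lemma cond_bind y s G n (b : bool) :
  (index (nm G n) (unzip1 G) != n) || ~~ ((nm G n != y) && b) ->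
  (index (nm ((y, s) :: G) n.+1) (unzip1 ((y, s) :: G)) != n.+1) || ~~ b.
Proof.
rewrite /nm /=; case: (y =P (nth (0%N, TR) G n).1) => [->|ne]; first by rewrite eqxx.
have -> : ((nth (0%N, TR) G n).1 != y) by apply/eqP=> e; apply: ne; rewrite e.
by rewrite eqSS.
Qed.

Arguments cond_l {c a b}.
Arguments cond_r {c a b}.
Arguments cond_bind {y s G n b}.

Scheme sty_ind := Induction for styped Sort Prop
 with pty_ind := Induction for ptyped Sort Prop.

Lemma IndS : forall G (s : sterm R Fsym) t (d : styped fin fout G s t) n,
  (index (nm G n) (unzip1 G) != n) || ~~ fv_s s (nm G n) -> Indep G n _ (sI RS d).
Proof.
apply: (@sty_ind R Fsym fin fout (fun G s t (d : styped fin fout G s t) => forall n,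
  (index (nm G n) (unzip1 G) != n) || ~~ fv_s s (nm G n) -> Indep G n _ (sI RS d))
  (fun G p t (d : ptyped fin fout G p t) => forall n,
  (index (nm G n) (unzip1 G) != n) || ~~ fv_p p (nm G n) -> Indep G n _ (pI RS d))).
- move=> G x s [|n] /=; last by move=> _; exact: Ind_pi2.
  by rewrite /nm /= eqxx.
- move=> G x y s t ne d IH [|n] H; first exact: Ind_weak0.
  apply: Ind_weak; apply: IH; move: H; rewrite /nm /=.
  case: (y =P (nth (0%N, TR) G n).1) => [e|ne'].
    by move=> _; rewrite -e; apply/orP; right; rewrite eq_sym.
  by rewrite eqSS.
- move=> G x s t b d IH n H /=; apply: (@Ind_lam (x, s)); apply: IH; exact: cond_bind H.
- move=> G f p s t df IHf dp IHp n H /=; apply: Ind_comp; apply: Ind_pair.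
    simpl in H; exact: IHf _ (cond_l H).
  simpl in H; exact: IHp _ (cond_r H).
- move=> G u s t du IH n H /=; apply: Ind_comp; exact: IH.
- move=> G u s t du IH n H /=; apply: Ind_comp; exact: IH.
- move=> G u v s t du IHu dv IHv n H /=; apply: Ind_pair.
    exact: IHu _ (cond_l H).
  exact: IHv _ (cond_r H).
- move=> G r n _ /=; exact: Ind_const.
- move=> G f p dp IH n H /=; apply: Ind_comp; exact: IH.
- move=> G f u du IH n H /=; apply: (@Ind_lam (0%N, Rpow (fin f))); apply: Ind_comp; apply: Ind_pair.
    apply: (@Ind_weak (0%N, Rpow (fin f))); exact: IH.
  exact: (@Ind_pi2 (0%N, Rpow (fin f))).
- move=> G k r e n _ /=; apply: (@Ind_lam (0%N, Rpow k)); apply: Ind_comp; exact: (@Ind_pi2 (0%N, Rpow k)).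
- move=> G x u v s t du IHu dv IHv i n H /=.
  apply: (@Ind_lam (x, s)); apply: Ind_comp; apply: Ind_pair.
    apply: (@Ind_weak (x, s)); exact: IHv _ (cond_r H).
  apply: IHu; exact: cond_bind (cond_l H).
- move=> G x p u s t dp IHp du IHu n H /=.
  apply: (@Ind_omega (x, s)).
    exact: IHu _ (cond_r H).
  apply: IHp; exact: cond_bind (cond_l H).
- move=> G s n _ /=; exact: Ind_zero.
- move=> G u s du IH n H /=; exact: IH.
- move=> G u p s du IHu dp IHp n H /=; apply: Ind_add.
    exact: IHu _ (cond_l H).
  exact: IHp _ (cond_r H).
Qed.

Lemma IndP G (p : pterm R Fsym) t (d : ptyped fin fout G p t) n :
  (index (nm G n) (unzip1 G) != n) || ~~ fv_p p (nm G n) -> Indep G n _ (pI RS d).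
Proof.
elim: d => {G p t} [G s|G u s du|G u p s du dp IH] H /=.
- exact: Ind_zero.
- exact: (@IndS _ _ _ du).
- simpl in H; apply: Ind_add; first exact: (@IndS _ _ _ du _ (cond_l H)).
  exact: IH (cond_r H).
Qed.

Lemma lin_unique : forall G (s : sterm R Fsym) t (d : styped fin fout G s t) a b,
  lin_s s a -> lin_s s b -> a = b.
Proof.
apply: (@sty_ind R Fsym fin fout (fun G s t (d : styped fin fout G s t) => forall a b,
  lin_s s a -> lin_s s b -> a = b) (fun G p t (d : ptyped fin fout G p t) => True)) => //=.
- by move=> G x s a b /eqP -> /eqP ->.
- by move=> G x s t b d IH a c /andP[_ ha] /andP[_ hc]; exact: IH _ _ ha hc.
- by move=> G f p s t df IH dp _ a b /andP[ha _] /andP[hb _]; exact: IH _ _ ha hb.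
- by move=> G u v s t du IH dv _ a b /andP[ha _] /andP[hb _]; exact: IH _ _ ha hb.
- move=> G x u v s t du IHu dv IHv i a b.
  have key : forall c, ((c != x) && lin_s u c && ~~ fv_s v c) || (lin_s v c && ~~ fv_s u c) -> lin_s v c.
    move=> c /orP[/andP[/andP[/eqP nc hc] _]|/andP[//]].
    by case: nc; exact: IHu _ _ hc i.
  by move=> /key ha /key hb; exact: IHv _ _ ha hb.
Qed.

Lemma LinS : forall G (s : sterm R Fsym) t (d : styped fin fout G s t) n,
  index (nm G n) (unzip1 G) = n -> lin_s s (nm G n) -> Lin G n _ (sI RS d).
Proof.
apply: (@sty_ind R Fsym fin fout (fun G s t (d : styped fin fout G s t) => forall n,
  index (nm G n) (unzip1 G) = n -> lin_s s (nm G n) -> Lin G n _ (sI RS d))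
  (fun G p t (d : ptyped fin fout G p t) => True)) => //.
- move=> G x s [|n] /=; first by move=> _ _; exact: (@Lin_here (x, s)).
  by move=> + /eqP e; rewrite e eqxx.
- move=> G x y s t ne d IH [|n]; rewrite /nm /=.
    by move=> _ /eqP e; move: ne; rewrite e eqxx.
  move=> hi /eqP e; apply: (@Lin_weak (y, t)); apply: IH; rewrite /nm ?e /= ?eqxx //.
  have nyx : (y == x) = false by rewrite eq_sym; exact: negbTE ne.
  by move: hi; rewrite e nyx => -[].
- move=> G x s t b d IH n hi /= /andP[hn hb]; apply: (@Lin_lam (x, s)); apply: IH => //.
  by rewrite /nm /= eq_sym (negbTE hn) -/(nm G n) hi.
- move=> G f p s t df IH dp _ n hi /= /andP[hf hp]; apply: Lin_app; first exact: IH.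
  by apply: (@IndP _ _ _ dp); rewrite hp orbT.
- by move=> G u s t du IH n hi /= h; apply: Lin_pi1; exact: IH.
- by move=> G u s t du IH n hi /= h; apply: Lin_pi2; exact: IH.
- by move=> G u v s t du IHu dv IHv n hi /= /andP[hu hv]; apply: Lin_pair; [exact: IHu|exact: IHv].
- by move=> G f u du IH n hi /= h; apply: Lin_jac; exact: IH.
- move=> G x u v s t du IHu dv IHv i n hi /= /orP[/andP[/andP[/eqP nx hu] _]|/andP[hv hu]].
    by case: nx; exact: (@lin_unique _ _ _ du _ _ hu i).
  apply: (@Lin_lam (x, s)); apply: Lin_app.
    apply: (@Lin_weak (x, s)); exact: IHv.
  by apply: (@IndS _ _ _ du); rewrite /nm /= hu orbT.
Qed.

Lemma lin_of_Lin xs G B (F : Hom (cI (xs :: G)) B) : Lin (xs :: G) 0 B F ->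
  forall g : Hom unitobj (cI G),
  dlinear (compm F (pairm (compm g (bang (tI xs.2))) (idm (tI xs.2)))).
Proof.
move=> H g; rewrite /dlinear (CD5 ax) (CD4 ax) (D_const ax) (CD3_id ax).
have := H _ (pairm (compm g (bang _)) (pi2 (tI xs.2) (tI xs.2))) (pi1 (tI xs.2) (tI xs.2)).
by rewrite upd_0 upd_0; nrm2 => ->; nrm2.
Qed.

Lemma good_Rpow k (a : Hom unitobj (tI (Rpow k))) : good RS (Rpow k) a.
Proof. by elim: k a => [|k IH] a /=; try split. Qed.

Lemma mor_zero (A B : Obj C) : mor_of_pt (zerom unitobj (expo A B)) = zerom A B.
Proof. by rewrite (mor_of_pt_E) (zero_comp ax) (ev_zero ax). Qed.

Lemma good_zero t : good RS t (zerom _ _).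
Proof.
elim: t => [|s IHs u IHu|s IHs u IHu|s IHs] /=.
- done.
- by rewrite (pi1_zero ax) (pi2_zero ax).
- by move=> b _; rewrite (ev_zero ax).
- by rewrite mor_zero; exact: (lin_zero ax).
Qed.

Lemma good_add t a b : good RS t a -> good RS t b -> good RS t (addm a b).
Proof.
elim: t a b => [|s IHs u IHu|s IHs u IHu|s IHs] a b /=.
- done.
- move=> [h1 h2] [h3 h4]; rewrite (pi1_additive ax _ _).1 (pi2_additive ax _ _).1.
  by split; [exact: IHs|exact: IHu].
- by move=> ha hb c hc; rewrite (ev_add ax); apply: IHu; [exact: ha|exact: hb].
- move=> ha hb; rewrite (mor_of_pt_E) (add_comp ax) (ev_add ax).
  exact: (lin_add ax).
Qed.

Lemma lin_Dslice (Gm S B : Obj C) (P : Hom (prodo Gm S) B) (c : Hom unitobj (prodo Gm S)) :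
  dlinear (compm (Dop P) (pairm (pairm (zerom S Gm) (idm S)) (compm c (bang S)))).
Proof.
rewrite /dlinear (CD5 ax) !(CD4 ax) (CD1_zero ax) (CD3_id ax) (D_const ax).
by nrm2; rewrite (CD6 ax); nrm2.
Qed.

Ltac nrm3 := repeat first [ rewrite (cA ax) | rewrite (pi1_pair ax) | rewrite (pi2_pair ax)
  | rewrite (pi1_pair' ax) | rewrite (pi2_pair' ax) | rewrite (pair_comp ax)
  | rewrite (comp_idl ax) | rewrite (comp_idr ax) | rewrite (zero_comp ax)
  | rewrite (pi1_zero ax) | rewrite (pi2_zero ax) | rewrite prodm_E
  | rewrite (bang_comp ax) | rewrite (ev_cur_pair ax) | rewrite mor_of_pt_E ].

Lemma Sound (hok : realstr_ok RS) : forall G (s : sterm R Fsym) t (d : styped fin fout G s t) g,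
  ctx_good RS G g -> good RS t (compm (sI RS d) g).
Proof.
apply: (@sty_ind R Fsym fin fout (fun G s t (d : styped fin fout G s t) => forall g,
  ctx_good RS G g -> good RS t (compm (sI RS d) g))
  (fun G p t (d : ptyped fin fout G p t) => forall g,
  ctx_good RS G g -> good RS t (compm (pI RS d) g))).
- by move=> G x s g [_ H].
- by move=> G x y s t ne d IH g [Hg _] /=; rewrite (cA ax); exact: IH Hg.
- move=> G x s t b d IH g Hg /= c Hc; rewrite (ev_cur_pair ax); apply: IH.
  by split; rewrite ?(pi1_pair ax) ?(pi2_pair ax).
- move=> G f p s t df IHf dp IHp g Hg /=; rewrite (cA ax) (pair_comp ax).
  by apply: (IHf g Hg); exact: IHp.
- by move=> G u s t du IH g Hg /=; rewrite (cA ax); exact: (IH g Hg).1.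
- by move=> G u s t du IH g Hg /=; rewrite (cA ax); exact: (IH g Hg).2.
- move=> G u v s t du IHu dv IHv g Hg /=; rewrite (pair_comp ax).
  by split; rewrite ?(pi1_pair ax) ?(pi2_pair ax); [exact: IHu|exact: IHv].
- done.
- by move=> *; exact: good_Rpow.
- by move=> G f u du IH g Hg b _; exact: good_Rpow.
- move=> G k r e g Hg; cbn [good sI].
  have -> : mor_of_pt (compm (curm (compm (dualc RS k r) (pi2 (cI G) (tI (Rpow k))))) g)
    = dualc RS k r by nrm3.
  by case: hok => _ [_ [_ [hl _]]]; exact: hl.
- move=> G x u v s t du IHu dv IHv i g Hg; cbn [good sI].
  set V := sI RS dv; set T := sI RS du.
  have -> : mor_of_pt (compm (curm (compm (evm _ _) (pairm (compm V (pi1 _ _)) T))) g)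
    = compm (mor_of_pt (compm V g)) (compm T (pairm (compm g (bang _)) (idm _))) by nrm3.
  apply: (lin_comp ax); first exact: IHv.
  apply: (@lin_of_Lin (x, s)); apply: (@LinS _ _ _ du 0) => //=; by rewrite /nm /= eqxx.
- move=> G x p u s t dp IHp du IHu g Hg; cbn [good] => b Hb.
  set c := pairm g b.
  have Hc : ctx_good RS ((x, s) :: G) c by split; rewrite /c ?(pi1_pair ax) ?(pi2_pair ax).
  set e := compm (evm _ _) (pairm (compm (sI RS du) g) (compm (pI RS dp) c)).
  have He : dlinear (mor_of_pt e) := IHu g Hg _ (IHp c Hc).
  have -> : mor_of_pt (compm (evm _ _) (pairm (compm (sI RS (TyOmega dp du)) g) b))
    = compm (mor_of_pt e) (compm (Dop (pI RS dp))
         (pairm (pairm (zerom _ _) (idm _)) (compm c (bang _)))).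
    by cbn [sI]; rewrite /e /c; nrm3.
  apply: (lin_comp ax); first exact: He.
  exact: lin_Dslice.
- by move=> G s g _ /=; rewrite (zero_comp ax); exact: good_zero.
- by move=> G u s du IH g Hg /=; exact: IH.
- by move=> G u p s du IHu dp IHp g Hg /=; rewrite (add_comp ax); apply: good_add; [exact: IHu|exact: IHp].
Qed.

Lemma SoundP (hok : realstr_ok RS) G (p : pterm R Fsym) t (d : ptyped fin fout G p t) g :
  ctx_good RS G g -> good RS t (compm (pI RS d) g).
Proof.
elim: d g => {G p t} [G s|G u s du|G u p s du dp IH] g Hg /=.
- by rewrite (zero_comp ax); exact: good_zero.
- exact: Sound.
- by rewrite (add_comp ax); apply: good_add; [exact: Sound|exact: IH].
Qed.

Lemma LinP G (p : pterm R Fsym) t (d : ptyped fin fout G p t) n :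
  index (nm G n) (unzip1 G) = n -> lin_p p (nm G n) -> Lin G n _ (pI RS d).
Proof.
case: d => {G p t} [G s|G u s du|G u p s du dp] //= hi hl.
exact: (@LinS _ _ _ du).
Qed.

Lemma part1 (G : ctx) (x : nat) (s1 t : ty) (P1 : pterm R Fsym)
   (d : ptyped fin fout ((x, s1) :: G) P1 t) (g : Hom unitobj (ctxI RS G)) :
   lin_p P1 x -> dlinear (mor_of_pt (compm (curm (pI RS d)) g)).
Proof.
move=> hl.
have HL : Lin ((x, s1) :: G) 0 _ (pI RS d).
  by apply: LinP => //; rewrite /nm /= eqxx.
have -> : mor_of_pt (compm (curm (pI RS d)) g)
   = compm (pI RS d) (pairm (compm g (bang _)) (idm _)) by nrm3.
exact: (@lin_of_Lin (x, s1)).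
Qed.

Lemma part2 (hok : realstr_ok RS) (G : ctx) (s : ty) (P2 : pterm R Fsym)
   (d : ptyped fin fout G P2 (TDual s)) (g : Hom unitobj (ctxI RS G)) :
   ctx_good RS G g -> dlinear (mor_of_pt (compm (pI RS d) g)).
Proof. move=> Hg; exact: (@SoundP hok _ _ _ d g Hg). Qed.

End Main.

Theorem lemma4p1 (R : realType) (C : lcat) (Fsym : Type) (fin fout : Fsym -> nat)
    (RS : realstr R C fin fout) :
  dlc_axioms C -> realstr_ok RS -> hahn_banach RS ->
  (forall (G : ctx) (x : nat) (s1 t : ty) (P1 : pterm R Fsym)
          (d : ptyped fin fout ((x, s1) :: G) P1 t) (g : Hom unitobj (ctxI RS G)),
     lin_p P1 x -> ctx_good RS G g ->
     dlinear (mor_of_pt (compm (curm (pI RS d)) g)))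
  /\
  (forall (G : ctx) (s : ty) (P2 : pterm R Fsym)
          (d : ptyped fin fout G P2 (TDual s)) (g : Hom unitobj (ctxI RS G)),
     ctx_good RS G g ->
     dlinear (mor_of_pt (compm (pI RS d) g))).
Proof.
move=> ax hok _; split.
- by move=> G x s1 t P1 d g hl _; exact: part1.
- by move=> G s P2 d g Hg; exact: part2.
Qed.
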